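(* Let $\mathcal{G}=\langle S,A,T,s_0,F\rangle$ be a two-player turn-based deterministic reachability game, let $X,Y\subseteq\mathrm{Win}_2(\mathcal{G},F)\setminus F$ with $X\cap Y=\emptyset$, and let $s\in\mathrm{Win}_2(\mathcal{G},F)\setminus(F\cup Y)$. Then the set of actions at $s$ that are subjectively rationalizable for P2 under the almost-sure winning condition in $\mathcal{G}$ (with goal $F$) is equal to the set of actions at $s$ that are subjectively rationalizable for P2 under the almost-sure winning condition in P2's perceptual game $\mathcal{G}^2_{X,Y}$ (with goal $F\cup Y$).
   Context: A two-player turn-based deterministic reachability game is a tuple $\mathcal{G}=\langle S,A,T,s_0,F\rangle$: $S$ finite, partitioned into P1 states $S_1$ and P2 states $S_2$; $A=A_1\cup A_2$ (P1 and P2 actions); $T:(S_1\times A_1)\cup(S_2\times A_2)\to S$ deterministic, possibly partial ($a$ enabled at $s$ iff $T(s,a)$ defined; every state has an enabled action); $s_0$ initial; $F\subseteq S$ a set of sink states (P2's goal). For a target $R\subseteq S$: $Z_0=R$, $Z_{k+1}=Z_k\cup\{s\in S_1:T(s,a)\in Z_k\ \forall\text{ enabled }a\}\cup\{s\in S_2:T(s,a)\in Z_k\text{ for some enabled }a\}$, and $\mathrm{Win}_2(\mathcal{G},R)=\bigcup_kZ_k$ (P2's sure/almost-sure winning region for reaching $R$). P2's perceptual game $\mathcal{G}^2_{X,Y}=\langle S,A,T,s_0,F\cup Y\rangle$ has the same transitions $T$ and goal set $F\cup Y$. In a game with transitions $T$ and P2-goal $R$, the set of actions at a state $q$ that are subjectively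 rationalizable for P2 under the almost-sure winning condition is: if $q\in S_2\cap\mathrm{Win}_2(\mathcal{G},R)\setminus R$, the set $\{a\text{ enabled at }q:T(q,a)\in\mathrm{Win}_2(\mathcal{G},R)\}$; otherwise (P1 states and P2 states outside $\mathrm{Win}_2(\mathcal{G},R)\setminus R$), all actions enabled at $q$. *)

(* Defs.v *)
From mathcomp Require Import all_boot.
Set Implicit Arguments. Unset Strict Implicit. Unset Printing Implicit Defensive.

(* S1 is the set of P1 states; P2 states are ~: S1. *)
Record game (S A : finType) := Game {
  S1 : {set S};
  A1 : {set A};
  A2 : {set A};
  trans : S -> A -> option S;
  init : S;
  goalF : {set S}
}.

Section Defs.
Variables (S A : finType).

Definition enabled (G : game S A) (s : S) (a : A) : bool :=
  trans G s a != None.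

Definition wf_game (G : game S A) : Prop :=
  (forall a : A, (a \in A1 G) || (a \in A2 G)) /\
  (forall s a, enabled G s a ->
     ((s \in S1 G) && (a \in A1 G)) || ((s \notin S1 G) && (a \in A2 G))) /\
  (forall s, exists a, enabled G s a) /\
  (forall s a t, s \in goalF G -> trans G s a = Some t -> t = s).

Fixpoint Zk (G : game S A) (R : {set S}) (k : nat) : {set S} :=
  match k with
  | 0 => R
  | k'.+1 =>
      Zk G R k'
      :|: [set s | (s \in S1 G) &&
                   [forall a, if trans G s a is Some t then t \in Zk G R k' else true]]
      :|: [set s | (s \notin S1 G) &&
                   [exists a, if trans G s a is Some t then t \in Zk G R k' else false]]
  end.

Definition Win2 (G : game S A) (R : {set S}) (s : S) : Prop :=
  exists k, s \in Zk G R k.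

Definition perceptual (G : game S A) (X Y : {set S}) : game S A :=
  Game (S1 G) (A1 G) (A2 G) (trans G) (init G) (goalF G :|: Y).

Definition rationalizable (G : game S A) (R : {set S}) (q : S) (a : A) : Prop :=
  enabled G q a /\
  ((q \notin S1 G) /\ Win2 G R q /\ (q \notin R) ->
     exists t, trans G q a = Some t /\ Win2 G R t).

End Defs.

(* Main.v *)
Require Import Defs.
From mathcomp Require Import all_boot.

Section H.
Variables (S A : finType).
Implicit Types (G : game S A).

Lemma Zk_step G R k :
  Zk G R k.+1 = Zk G R k
      :|: [set s | (s \in S1 G) &&
                   [forall a, if trans G s a is Some t then t \in Zk G R k else true]]
      :|: [set s | (s \notin S1 G) &&
                   [exists a, if trans G s a is Some t then t \in Zk G R k else false]].
Proof. by []. Qed.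

Lemma step_mono G (B C : {set S}) : B \subset C ->
  B :|: [set s | (s \in S1 G) &&
                   [forall a, if trans G s a is Some t then t \in B else true]]
      :|: [set s | (s \notin S1 G) &&
                   [exists a, if trans G s a is Some t then t \in B else false]]
  \subset
  C :|: [set s | (s \in S1 G) &&
                   [forall a, if trans G s a is Some t then t \in C else true]]
      :|: [set s | (s \notin S1 G) &&
                   [exists a, if trans G s a is Some t then t \in C else false]].
Proof.
move=> /subsetP BC; apply/subsetP => x.
rewrite !inE => /orP [/orP [xB|/andP [h1 /forallP h2]]|/andP [h1 /existsP [a h2]]].
- by rewrite BC.
- apply/orP; left; apply/orP; right; rewrite h1 /=; apply/forallP => a.
  by move: (h2 a); case: (trans G x a) => // t /BC.
- apply/orP; right; rewrite h1 /=; apply/existsP; exists a.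
  by move: h2; case: (trans G x a) => // t /BC.
Qed.

Lemma Zk_mono_k G R k : Zk G R k \subset Zk G R k.+1.
Proof. by rewrite Zk_step -setUA subsetUl. Qed.

Lemma Zk_mono_le G R k l : k <= l -> Zk G R k \subset Zk G R l.
Proof.
elim: l => [|l IH]; first by rewrite leqn0 => /eqP ->.
rewrite leq_eqVlt => /orP [/eqP -> //|/IH H].
exact: subset_trans H (Zk_mono_k _ _ _).
Qed.

Lemma Zk_shift G (R F : {set S}) K k : R \subset Zk G F K -> Zk G R k \subset Zk G F (k + K).
Proof.
move=> h; elim: k => [//|k IH].
rewrite Zk_step addSn Zk_step; exact: step_mono.
Qed.

Lemma Zk_monoR G (R R' : {set S}) k : R \subset R' -> Zk G R k \subset Zk G R' k.
Proof.
move=> h; elim: k => [//|k IH]; rewrite !Zk_step; exact: step_mono.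
Qed.

Lemma Zk_perc G X Y R k : Zk (perceptual G X Y) R k = Zk G R k.
Proof. by elim: k => [//|k IH]; rewrite /= IH. Qed.

Lemma bound_seq G F (l : seq S) : (forall y, y \in l -> Win2 G F y) ->
  exists K, forall y, y \in l -> y \in Zk G F K.
Proof.
elim: l => [|x l IH] h; first by exists 0.
have [K HK] : exists K, forall y, y \in l -> y \in Zk G F K.
  by apply: IH => y yl; apply: h; rewrite inE yl orbT.
have [k Hk] := h x (mem_head _ _).
exists (maxn k K) => y; rewrite inE => /orP [/eqP ->|yl].
- exact: (subsetP (@Zk_mono_le G F _ _ (leq_maxl k K))) Hk.
- exact: (subsetP (@Zk_mono_le G F _ _ (leq_maxr k K))) (HK y yl).
Qed.

Lemma Win_eq G (Y : {set S}) t : (forall y, y \in Y -> Win2 G (goalF G) y) ->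
  Win2 G (goalF G :|: Y) t <-> Win2 G (goalF G) t.
Proof.
move=> hY; split.
- have hl : forall y, y \in enum Y -> Win2 G (goalF G) y.
    by move=> y; rewrite mem_enum; apply: hY.
  have [K HK] := @bound_seq G (goalF G) (enum Y) hl.
  have sub : goalF G :|: Y \subset Zk G (goalF G) K.
    apply/subsetP => x; rewrite inE => /orP [xF|xY].
    + exact: (subsetP (@Zk_mono_le G (goalF G) _ _ (leq0n K))).
    + by apply: HK; rewrite mem_enum.
  move=> [k hk]; exists (k + K); exact: (subsetP (@Zk_shift G _ _ _ k sub)).
- move=> [k hk]; exists k; exact: (subsetP (@Zk_monoR G _ _ k (subsetUl _ Y))).
Qed.
End H.

Theorem lemma3 (S A : finType) (G : game S A) (X Y : {set S}) (s : S) :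
  wf_game G ->
  (forall x, x \in X -> Win2 G (goalF G) x /\ x \notin goalF G) ->
  (forall y, y \in Y -> Win2 G (goalF G) y /\ y \notin goalF G) ->
  [disjoint X & Y] ->
  Win2 G (goalF G) s -> s \notin goalF G :|: Y ->
  forall a : A,
    rationalizable G (goalF G) s a <->
    rationalizable (perceptual G X Y) (goalF (perceptual G X Y)) s a.
Proof.
move=> _ _ hY _ hs hsn a.
have hY' : forall y, y \in Y -> Win2 G (goalF G) y by move=> y /hY [].
have WP : forall t, Win2 (perceptual G X Y) (goalF (perceptual G X Y)) t <->
                   Win2 G (goalF G) t.
  move=> t; have E := @Win_eq _ _ G Y t hY'.
  split=> [[k hk]|/E [k hk]].
  - by apply/E; exists k; rewrite Zk_perc in hk.
  - by exists k; rewrite Zk_perc.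
have sF : s \notin goalF G by move: hsn; rewrite inE negb_or => /andP [].
rewrite /rationalizable /enabled /=.
split=> [[en h]|[en h]]; split=> // -[h1 _].
- have [t [ht wt]] := h (conj h1 (conj hs sF)).
  by exists t; split=> //; apply/WP.
- have [t [ht wt]] := h (conj h1 (conj (proj2 (WP s) hs) hsn)).
  by exists t; split=> //; apply/WP.
Qed.
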